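(* Let $\mathcal{A}_l\subseteq\mathcal{A}$ be nonempty, $\alpha=\frac{T_{\mathrm{off}}}{T_{\mathrm{off}}+T}$, and let $\pi^{(t)}\in\Delta(\mathcal{A}_l)$ be an iterate of the Frank–Wolfe procedure described in the context with $\delta(\pi^{(t)})\le\frac{d_{\mathrm{eff}}}{d}$. Then, with $\tilde\pi^{(t)}=(1-\alpha)\pi^{(t)}+\alpha\pi_{\mathrm{off}}$, $$(1-\alpha)g_{\mathcal{A}_l}(\tilde\pi^{(t)})\le2d_{\mathrm{eff}}.$$
   Context: $\mathcal{A}\subset\mathbb{R}^d$ finite, spanning $\mathbb{R}^d$, $d\ge2$; $\pi_{\mathrm{off}}\in\Delta(\mathcal{A})$; $T\ge1$, $T_{\mathrm{off}}\ge0$ integers. $V_\pi=\sum_a\pi(a)aa^\top$, $g_{\mathcal{B}}(\pi)=\max_{a\in\mathcal{B}}a^\top V_\pi^{-1}a$, $\lambda_k$ the $k$-th smallest eigenvalue, $d_{\mathrm{eff}}=\min\big(\sum_{k=1}^d(1+\frac{T_{\mathrm{off}}}{T}\frac{\lambda_k(V_{\pi_{\mathrm{off}}})}{\max_a\|a\|^2})^{-1},\frac{T}{T_{\mathrm{off}}}g_{\mathcal{A}}(\pi_{\mathrm{off}})\big)$. Frank–Wolfe procedure: initialization $B=\emptyset$, $c=e_1$; for $i=1,\dots,d$ add $a\in\arg\max_{a\in\mathcal{A}_l}|\langle c,a\rangle|$ to $B$ and let $c$ be a nonzero vector orthogonal to all elements of $B$; $\pi^{(0)}$ uniform on $B$.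 For $\pi$ with $(1-\alpha)V_\pi+\alpha V_{\pi_{\mathrm{off}}}$ nonsingular let $H(\pi)=((1-\alpha)V_\pi+\alpha V_{\pi_{\mathrm{off}}})^{-1}$, $w_a=\mathrm{Tr}(H(\pi)((1-\alpha)aa^\top+\alpha V_{\pi_{\mathrm{off}}}))$ for $a\in\mathcal{A}_l$, $a_+\in\arg\max_aw_a$, slack $\delta(\pi)=w_{a_+}/d-1$; update $\pi^{(t+1)}=(1+\beta)^{-1}(\pi^{(t)}+\beta\mathbb{1}_{\{a_+\}})$ with $\beta=\frac{w_{a_+}-d}{(d-1)w_{a_+}}$. *)

(* Defs.v *)
From HB Require Import structures.
From mathcomp Require Import all_boot all_order all_algebra.
From mathcomp Require Import reals.
Set Implicit Arguments. Unset Strict Implicit. Unset Printing Implicit Defensive.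
Import Order.TTheory GRing.Theory Num.Theory.
Local Open Scope ring_scope.

(* The finite action set is given as the columns of a d x m matrix A:
   action j : 'I_m is the vector col j A.  Subsets of actions are {set 'I_m};
   distributions are functions 'I_m -> R. *)

Section Defs.
Variables (R : realType) (d m : nat) (A : 'M[R]_(d, m)).

Definition act (j : 'I_m) : 'cV[R]_d := col j A.

Definition inner (x y : 'cV[R]_d) : R := (x^T *m y) 0 0.

Definition quad (M : 'M[R]_d) (x : 'cV[R]_d) : R := (x^T *m M *m x) 0 0.

Definition is_distr (S : {set 'I_m}) (p : 'I_m -> R) : Prop :=
  [/\ forall j, 0 <= p j, forall j, j \notin S -> p j = 0 & \sum_j p j = 1].

Definition Vmat (p : 'I_m -> R) : 'M[R]_d :=
  \sum_j p j *: (act j *m (act j)^T).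

(* g_B(pi) = max_{a in B} a^T V_pi^{-1} a  (all terms are >= 0 when V_pi is
   positive definite, so 0 as neutral element is harmless for nonempty B) *)
Definition gB (B : {set 'I_m}) (p : 'I_m -> R) : R :=
  \big[Num.max/0]_(j in B) quad (invmx (Vmat p)) (act j).

Definition mix (al : R) (p q : 'I_m -> R) : 'I_m -> R :=
  fun j => (1 - al) * p j + al * q j.

Definition Hmat (al : R) (poff p : 'I_m -> R) : 'M[R]_d :=
  invmx ((1 - al) *: Vmat p + al *: Vmat poff).

Definition wgt (al : R) (poff p : 'I_m -> R) (j : 'I_m) : R :=
  \tr (Hmat al poff p *m ((1 - al) *: (act j *m (act j)^T) + al *: Vmat poff)).

Definition slack (al : R) (poff : 'I_m -> R) (Al : {set 'I_m}) (p : 'I_m -> R) : R :=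
  (\big[Num.max/0]_(j in Al) wgt al poff p j) / d%:R - 1.

Definition e1 : 'cV[R]_d := \col_(k < d) ((k == 0 :> nat)%:R).

(* Initialization of Frank-Wolfe: greedy choice of B = {a_1,...,a_d},
   with c_1 = e_1, a_i in argmax_{a in A_l} |<c_i, a>|, and for i >= 2,
   c_i a nonzero vector orthogonal to a_1, ..., a_{i-1};
   pi^(0) uniform on B.  (indices i are 0-based here) *)
Definition fw_init (Al : {set 'I_m}) (p0 : 'I_m -> R) : Prop :=
  exists (b : 'I_d -> 'I_m) (c : 'I_d -> 'cV[R]_d),
    (forall i : 'I_d,
       [/\ (nat_of_ord i = 0%N -> c i = e1),
           ((0 < i)%N -> c i != 0 /\
              forall i' : 'I_d, (i' < i)%N -> inner (c i) (act (b i')) = 0),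
           b i \in Al &
           forall k, k \in Al ->
             `|inner (c i) (act k)| <= `|inner (c i) (act (b i))| ])
    /\ let B := [set b i | i : 'I_d] in
       forall k, p0 k = if k \in B then (#|B|%:R)^-1 else 0.

Definition fw_step (al : R) (poff : 'I_m -> R) (Al : {set 'I_m})
    (p p' : 'I_m -> R) : Prop :=
  ((1 - al) *: Vmat p + al *: Vmat poff \in unitmx) /\
  exists2 j, j \in Al &
    (forall k, k \in Al -> wgt al poff p k <= wgt al poff p j) /\
    let beta := (wgt al poff p j - d%:R) / ((d%:R - 1) * wgt al poff p j) in
    forall k, p' k = (1 + beta)^-1 * (p k + beta * (k == j)%:R).

Inductive fw_iter (al : R) (poff : 'I_m -> R) (Al : {set 'I_m})
  : nat -> ('I_m -> R) -> Prop :=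
| FW0 p : fw_init Al p -> fw_iter al poff Al 0 p
| FWS t p p' : fw_iter al poff Al t p -> fw_step al poff Al p p' ->
               fw_iter al poff Al t.+1 p'.

Definition Lmax : R := \big[Num.max/0]_j inner (act j) (act j).

(* d_eff, given the eigenvalues lam of V_{pi_off}.  The second term of the min
   is +infinity when T_off = 0 or V_{pi_off} is singular (g_A = +infinity). *)
Definition deff (T Toff : nat) (poff : 'I_m -> R) (lam : 'I_d -> R) : R :=
  let S := \sum_(k < d) (1 + (Toff%:R / T%:R) * (lam k / Lmax))^-1 in
  if (0 < Toff)%N && (Vmat poff \in unitmx)
  then Num.min S (T%:R / Toff%:R * gB setT poff)
  else S.

End Defs.

(* Main.v *)
Require Import Defs.
From HB Require Import structures.
From mathcomp Require Import all_boot all_order all_algebra.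
From mathcomp Require Import reals.
From mathcomp Require Import complex sesquilinear spectral ring lra.
Set Implicit Arguments. Unset Strict Implicit. Unset Printing Implicit Defensive.
Import Order.TTheory GRing.Theory Num.Theory.
Local Open Scope ring_scope.

Lemma char_poly_conj (F : fieldType) n (P A : 'M[F]_n) : P \in unitmx ->
  char_poly (invmx P *m A *m P) = char_poly A.
Proof.
move=> Pu; rewrite /char_poly.
have -> : char_poly_mx (invmx P *m A *m P) =
   map_mx (@polyC F) (invmx P) *m char_poly_mx A *m map_mx (@polyC F) P.
  rewrite /char_poly_mx mulmxBr mulmxBl !map_mxM; congr (_ - _).
  rewrite mul_mx_scalar -scalemxAl -map_mxM mulVmx // map_mx1.
  by rewrite scalemx1.
rewrite !det_mulmx mulrC mulrA -det_mulmx.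
by rewrite -map_mxM mulmxV // map_mx1 det1 mul1r.
Qed.

Lemma invmx_eq (F : fieldType) n (A B : 'M[F]_n) : B *m A = 1%:M -> invmx A = B.
Proof.
move=> BA; have [_ Au] := mulmx1_unit BA.
have AB := mulmx1C BA.
by rewrite -[invmx A]mulmx1 -AB mulmxA mulVmx // mul1mx.
Qed.

Lemma EL (R : realType) n (V : 'M[R]_n) (lam : 'I_n -> R) (c s : R) :
  V^T = V -> char_poly V = \prod_(k < n) ('X - (lam k)%:P) ->
  (forall k, c + s * lam k != 0) ->
  (c%:M + s *: V) \in unitmx /\
  \tr (invmx (c%:M + s *: V)) = \sum_(k < n) (c + s * lam k)^-1.
Proof.
move=> hV hchar hnz.
pose f := real_complex R.
pose Vc := map_mx f V.
have Vn : Vc \is normalmx.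
  rewrite qualifE; have -> : (Vc ^t* = Vc)%sesqui.
    apply/matrixP => i j; rewrite !mxE.
    have -> : V j i = V i j by rewrite -{1}hV mxE.
    by change (conjc (f (V i j)) = f (V i j)); rewrite conjc_real.
  by [].
have /orthomx_spectralP := Vn.
set P := spectralmx Vc; set D := spectral_diag Vc => VcE.
have Pu : P \in unitmx by apply: spectral_unit.
have cpc : char_poly Vc = \prod_(k < n) ('X - (D 0 k)%:P).
  rewrite VcE char_poly_conj // char_poly_trig ?diag_mx_is_trig //.
  by apply: eq_bigr => k _; rewrite mxE eqxx mulr1n.
have cpc' : char_poly Vc = \prod_(k < n) ('X - (f (lam k))%:P).
  rewrite -map_char_poly hchar rmorph_prod; apply: eq_bigr => k _.
  exact: map_polyXsubC.
have pe : perm_eq [seq f (lam k) | k <- index_enum 'I_n] [seq D 0 k | k <- index_enum 'I_n].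
  apply: prod_XsubC_eq; rewrite !big_map.
  by rewrite -cpc -cpc'.
have Dnz : forall k, f c + f s * D 0 k != 0.
  move=> k; have : D 0 k \in [seq D 0 k | k <- index_enum 'I_n] by apply: map_f; rewrite mem_index_enum.
  rewrite -(perm_mem pe) => /mapP [j _ ->].
  by rewrite -rmorphM -rmorphD fmorph_eq0.
pose E := diag_mx (\row_k (f c + f s * D 0 k)).
pose Ei := diag_mx (\row_k (f c + f s * D 0 k)^-1).
have McE : map_mx f (c%:M + s *: V) = invmx P *m E *m P.
  have -> : E = (f c)%:M + f s *: diag_mx D.
    apply/matrixP => i j; rewrite !mxE; case: eqP => [->|_]; rewrite ?mulr1n ?mulr0n ?mulr0 ?addr0 //.
  rewrite mulmxDr mulmxDl -scalemxAr -scalemxAl -VcE mul_mx_scalar -scalemxAl mulVmx //.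
  rewrite scalemx1 raddfD /= map_scalar_mx; congr (_ + _).
  by apply/matrixP => i j; rewrite !mxE; apply: rmorphM.
have EiE : Ei *m E = 1%:M.
  rewrite mul_diag_mx; apply/matrixP => i j; rewrite !mxE.
  case: eqP => [->|_]; rewrite ?mulr1n ?mulr0n ?mulr0 //.
  by rewrite mulVf.
have inv : invmx (map_mx f (c%:M + s *: V)) = invmx P *m Ei *m P.
  apply: invmx_eq; rewrite McE !mulmxA -[_ *m P *m invmx P]mulmxA mulmxV // mulmx1.
  by rewrite -[_ *m Ei *m E]mulmxA EiE mulmx1 mulVmx.
split.
  rewrite -(map_unitmx f) McE !unitmx_mul Pu unitmx_inv Pu andbT /=.
  by have [] := mulmx1_unit EiE.
apply: (@complexI R).
transitivity (\tr (map_mx f (invmx (c%:M + s *: V)))); first by rewrite trace_map_mx.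
rewrite map_invmx inv mxtrace_mulC mulmxA mulmxV // mul1mx.
rewrite mxtrace_diag rmorph_sum /=.
under eq_bigr do rewrite mxE.
under [in RHS]eq_bigr do rewrite fmorphV rmorphD rmorphM.
rewrite -(big_map (fun k => D 0 k) predT (fun x => (f c + f s * x)^-1)).
rewrite -(big_map (fun k => f (lam k)) predT (fun x => (f c + f s * x)^-1)).
by symmetry; apply: perm_big.
Qed.

Section Helpers.
Variables (R : realType) (d m : nat) (A : 'M[R]_(d, m)).

Definition bil (M : 'M[R]_d) (x y : 'cV[R]_d) : R := (x^T *m M *m y) 0 0.

Lemma quad_bil M x : quad M x = bil M x x. Proof. by []. Qed.

Lemma mx11_tr (B : 'M[R]_1) : B^T 0 0 = B 0 0.
Proof. by rewrite mxE. Qed.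

Lemma bilC M x y : M^T = M -> bil M x y = bil M y x.
Proof.
move=> hM; rewrite /bil -mx11_tr !trmx_mul trmxK hM mulmxA.
by [].
Qed.

Lemma bilBB M x y : bil M (x - y) (x - y) =
  bil M x x - bil M x y - bil M y x + bil M y y.
Proof.
rewrite /bil; have -> : (x - y)^T = x^T - y^T by apply/matrixP => i j; rewrite !mxE.
rewrite /bil !mulmxBl !mulmxBr !mxE; ring.
Qed.

Lemma bil_mulr M x y : bil M x y = (x^T *m (M *m y)) 0 0.
Proof. by rewrite /bil mulmxA. Qed.

Lemma inner_sym (x y : 'cV[R]_d) : inner x y = inner y x.
Proof. by rewrite /inner -mx11_tr trmx_mul trmxK. Qed.

Lemma inner_bil1 (x y : 'cV[R]_d) : inner x y = bil 1%:M x y.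
Proof. by rewrite /bil /inner mulmx1. Qed.

Lemma inner_ge0 (x : 'cV[R]_d) : 0 <= inner x x.
Proof.
rewrite /inner mxE; apply: sumr_ge0 => i _; rewrite mxE -expr2; exact: sqr_ge0.
Qed.

Lemma inner_eq0 (x : 'cV[R]_d) : inner x x = 0 -> x = 0.
Proof.
rewrite /inner mxE => /eqP; rewrite psumr_eq0; last first.
  by move=> i _; rewrite mxE -expr2 sqr_ge0.
move=> /allP h; apply/matrixP => i j; rewrite ord1 mxE.
have := h i (mem_index_enum _); rewrite mxE -expr2 sqrf_eq0.
by move/eqP.
Qed.

Lemma bilZl M t x y : bil M (t *: x) y = t * bil M x y.
Proof.
rewrite /bil; have -> : (t *: x)^T = t *: x^T by apply/matrixP => i j; rewrite !mxE.
by rewrite -!scalemxAl mxE.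
Qed.

Lemma bilZr M t x y : bil M x (t *: y) = t * bil M x y.
Proof. by rewrite /bil -!scalemxAr mxE. Qed.

Lemma cauchy_schwarz (x y : 'cV[R]_d) : inner x y ^+ 2 <= inner x x * inner y y.
Proof.
have [x0|xpos] := eqVneq (inner x x) 0.
  by rewrite (inner_eq0 x0) /inner trmx0 !mul0mx mxE expr0n /= mul0r.
have xp : 0 < inner x x by rewrite lt_def xpos inner_ge0.
set t := inner x y / inner x x.
have := inner_ge0 (y - t *: x).
rewrite !inner_bil1 bilBB bilZl bilZr bilZl bilZr -!inner_bil1.
rewrite (inner_sym y x) => h.
have e : t * inner x x = inner x y by rewrite /t mulfVK // gt_eqF.
clearbody t.
have h2 : 0 <= inner y y - t * inner x y.
  by move: h; rewrite e; lra.
have : 0 <= inner x x * (inner y y - t * inner x y) by apply: mulr_ge0 => //; exact: ltW.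
by rewrite mulrBr mulrA (mulrC _ t) e; lra.
Qed.

Lemma mx11_mul (B C : 'M[R]_1) : (B *m C) 0 0 = B 0 0 * C 0 0.
Proof. by rewrite mxE big_ord1. Qed.

Lemma bil_rank1 (a x y : 'cV[R]_d) :
  bil (a *m a^T) x y = inner a x * inner a y.
Proof.
rewrite /bil !mulmxA -(mulmxA (x^T *m a)) mx11_mul (inner_sym a x).
by [].
Qed.

Lemma bil_Vmat q x y : bil (Vmat A q) x y =
  \sum_j q j * (inner (act A j) x * inner (act A j) y).
Proof.
rewrite /bil /Vmat mulmx_sumr mulmx_suml summxE; apply: eq_bigr => j _.
by rewrite -scalemxAr -scalemxAl mxE -/(bil _ x y) bil_rank1.
Qed.

Lemma quad_Vmat q x : quad (Vmat A q) x = \sum_j q j * inner (act A j) x ^+ 2.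
Proof. by rewrite quad_bil bil_Vmat; apply: eq_bigr => j _; rewrite expr2. Qed.

Lemma quad_Vmat_ge0 q x : (forall j, 0 <= q j) -> 0 <= quad (Vmat A q) x.
Proof.
move=> hq; rewrite quad_Vmat; apply: sumr_ge0 => j _.
by apply: mulr_ge0 => //; apply: sqr_ge0.
Qed.

Lemma Vmat_sym q : (Vmat A q)^T = Vmat A q.
Proof.
apply/matrixP => i j; rewrite mxE /Vmat !summxE; apply: eq_bigr => k _; rewrite !mxE.
by rewrite !big_ord1 !mxE; ring.
Qed.

Lemma Vmat_mix al p q : Vmat A (mix al p q) = (1 - al) *: Vmat A p + al *: Vmat A q.
Proof.
rewrite /Vmat /mix !scaler_sumr -big_split /=; apply: eq_bigr => j _.
by rewrite !scalerA -scalerDl.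
Qed.

Lemma tr_rank1 (H : 'M[R]_d) a : \tr (H *m (a *m a^T)) = quad H a.
Proof.
rewrite mulmxA mxtrace_mulC /quad mulmxA /mxtrace big_ord1.
by [].
Qed.

Lemma tr_Vmat (H : 'M[R]_d) q : \tr (H *m Vmat A q) = \sum_j q j * quad H (act A j).
Proof.
rewrite /Vmat mulmx_sumr raddf_sum; apply: eq_bigr => j _.
by rewrite -scalemxAr /= mxtraceZ tr_rank1.
Qed.

Lemma inv_mono (P P' : 'M[R]_d) (a : 'cV[R]_d) :
  P^T = P -> P \in unitmx -> P' \in unitmx ->
  (forall x, 0 <= quad P x) -> (forall x, quad P x <= quad P' x) ->
  quad (invmx P') a <= quad (invmx P) a.
Proof.
move=> Ps Pu P'u Ppsd Ple.
set u := invmx P' *m a; set v := invmx P *m a.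
have Pv : P *m v = a by rewrite /v mulKVmx.
have P'u' : P' *m u = a by rewrite /u mulKVmx.
have e1 : quad (invmx P') a = inner a u by rewrite /quad /inner mulmxA.
have e2 : quad (invmx P) a = inner a v by rewrite /quad /inner mulmxA.
have e3 : quad P' u = inner a u by rewrite quad_bil bil_mulr P'u' -/(inner u a) inner_sym.
have e4 : bil P u v = inner a u by rewrite bil_mulr Pv -/(inner u a) inner_sym.
have e5 : bil P v v = inner a v by rewrite bil_mulr Pv -/(inner v a) inner_sym.
have h1 := Ple u; have h2 := Ppsd (u - v).
move: h1 h2; rewrite e3 e1 e2 [quad P (u - v)]quad_bil bilBB (bilC v u Ps) e4 e5 -quad_bil.
lra.
Qed.

Lemma quadD (M N : 'M[R]_d) x : quad (M + N) x = quad M x + quad N x.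
Proof. by rewrite /quad mulmxDr mulmxDl mxE. Qed.

Lemma quadZ c (M : 'M[R]_d) x : quad (c *: M) x = c * quad M x.
Proof. by rewrite /quad -scalemxAr -scalemxAl mxE. Qed.

Lemma quad_scalar c (x : 'cV[R]_d) : quad c%:M x = c * inner x x.
Proof. by rewrite -scalemx1 quadZ /quad mulmx1. Qed.

Lemma lam_ge0 (poff : 'I_m -> R) (lam : 'I_d -> R) :
  (forall j, 0 <= poff j) ->
  char_poly (Vmat A poff) = \prod_(k < d) ('X - (lam k)%:P) ->
  forall k, 0 <= lam k.
Proof.
move=> hp hchar k.
have : root (char_poly (Vmat A poff)) (lam k).
  rewrite hchar; apply/rootP; rewrite horner_prod (bigD1 k) //=.
  by rewrite hornerXsubC subrr mul0r.
rewrite -eigenvalue_root_char => /eigenvalueP [v hv vnz].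
have e : quad (Vmat A poff) v^T = lam k * inner v^T v^T.
  by rewrite /quad /inner trmxK hv -scalemxAl mxE.
have ipos : 0 < inner v^T v^T.
  rewrite lt_def inner_ge0 andbT; apply/eqP => /inner_eq0 h.
  by move: vnz; rewrite -(trmxK v) h trmx0 eqxx.
have := quad_Vmat_ge0 v^T hp; rewrite e.
by rewrite pmulr_lge0.
Qed.

Lemma wgt_eq al poff p k : wgt A al poff p k =
  (1 - al) * quad (Hmat A al poff p) (act A k) +
  al * \tr (Hmat A al poff p *m Vmat A poff).
Proof.
by rewrite /wgt mulmxDr mxtraceD -!scalemxAr !mxtraceZ tr_rank1.
Qed.

Lemma trH al poff p : (1 - al) *: Vmat A p + al *: Vmat A poff \in unitmx ->
  (1 - al) * \tr (Hmat A al poff p *m Vmat A p) +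
  al * \tr (Hmat A al poff p *m Vmat A poff) = d%:R.
Proof.
move=> hu; rewrite -!mxtraceZ -mxtraceD !scalemxAr -mulmxDr /Hmat mulVmx //.
exact: mxtrace1.
Qed.

Definition inv_distr (Al : {set 'I_m}) (p : 'I_m -> R) :=
  [/\ forall k, 0 <= p k, forall k, k \notin Al -> p k = 0 & \sum_k p k = 1].

Lemma fw_inv al poff Al t p : (2 <= d)%N -> fw_iter A al poff Al t p -> inv_distr Al p.
Proof.
move=> d2; elim => {t p} [p [b [c [hb hp]]] | t p p' _ [q1 q2 q3] [hu [j jAl [hmax hp']]]].
  set B := [set b i | i : 'I_d] in hp.
  have i0 : 'I_d by exists 0%N; apply: leq_trans d2.
  have Bn : (0 < #|B|)%N by apply/card_gt0P; exists (b i0); apply: imset_f.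
  split.
  - by move=> k; rewrite hp; case: ifP => // _; rewrite invr_ge0 ler0n.
  - move=> k kA; rewrite hp; case: ifP => // /imsetP [i _ ki].
    by move: kA; rewrite ki; have [_ _ -> _] := hb i.
  - rewrite (eq_bigr (fun k => if k \in B then #|B|%:R^-1 else 0)) //.
    have cB : (#|B|%:R : R) != 0 by rewrite pnatr_eq0 -lt0n.
    by rewrite -big_mkcond /= sumr_const -[in RHS](mulVf cB) mulr_natr.
set w := wgt A al poff p.
have sumw : \sum_k p k * w k = d%:R.
  rewrite -(trH hu); rewrite /w.
  under eq_bigr do rewrite wgt_eq mulrDr.
  rewrite big_split /= -[X in _ + X = _]mulr_suml q3 mul1r.
  rewrite (tr_Vmat _ p); congr (_ + _); rewrite mulr_sumr; apply: eq_bigr => k _; ring.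
have wj : d%:R <= w j.
  rewrite -sumw -[w j]mul1r -q3 mulr_suml; apply: ler_sum => k _.
  have [kA|kA] := boolP (k \in Al).
    by apply: ler_wpM2l => //; apply: hmax.
  by rewrite q2 // !mul0r.
have dpos : (1 : R) <= d%:R - 1.
  have : (2 : R) <= d%:R by rewrite ler_nat.
  by lra.
have wpos : 0 < w j by apply: lt_le_trans wj; rewrite ltr0n; apply: leq_trans d2.
pose beta := (w j - d%:R) / ((d%:R - 1) * w j).
have hp2 : forall k, p' k = (1 + beta)^-1 * (p k + beta * (k == j)%:R) := hp'.
have bpos : 0 <= beta.
  apply: divr_ge0; first by rewrite subr_ge0.
  by apply: mulr_ge0; [lra | exact: ltW].
have b1 : 0 < 1 + beta by lra.
split.
- move=> k; rewrite hp2; apply: mulr_ge0; first by rewrite invr_ge0 ltW.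
  by apply: addr_ge0 => //; apply: mulr_ge0 => //; rewrite ler0n.
- move=> k kA; rewrite hp2 q2 //; have -> : (k == j) = false.
    by apply/eqP => kj; move: kA; rewrite kj jAl.
  by rewrite mulr0 addr0 mulr0.
- under eq_bigr do rewrite hp2.
  rewrite -mulr_sumr big_split /= q3 -mulr_sumr (bigD1 j) //= eqxx big1 ?addr0 ?mulr1.
    by rewrite mulVf // gt_eqF.
  by move=> k /negbTE ->; rewrite mulr0n.
Qed.



Lemma Vmat_symE q i j : Vmat A q j i = Vmat A q i j.
Proof. by rewrite -[in LHS](Vmat_sym q) mxE. Qed.

Lemma Mx_sym a b p q : (a *: Vmat A p + b *: Vmat A q)^T = a *: Vmat A p + b *: Vmat A q.
Proof. by apply/matrixP => i j; rewrite !mxE (Vmat_symE p j i) (Vmat_symE q j i). Qed.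

Lemma Lmax_ge0 : 0 <= Lmax A.
Proof. exact: bigmax_ge_id. Qed.

Lemma quadVp_le q x : (forall j, 0 <= q j) -> \sum_j q j = 1 ->
  quad (Vmat A q) x <= Lmax A * inner x x.
Proof.
move=> q0 q1; rewrite quad_Vmat -[X in _ <= X]mul1r -q1 mulr_suml.
apply: ler_sum => j _; apply: ler_wpM2l => //.
rewrite inner_sym; apply: le_trans (cauchy_schwarz _ _) _.
rewrite mulrC; apply: (ler_wpM2r (inner_ge0 x)).
rewrite /Lmax; exact: (@le_bigmax _ R _ 0 (fun j => inner (act A j) (act A j)) j).
Qed.
End Helpers.

Theorem proposition5p7 (R : realType) (d m : nat) (A : 'M[R]_(d, m))
    (poff : 'I_m -> R) (T Toff : nat) (Al : {set 'I_m})
    (lam : 'I_d -> R) (t : nat) (p : 'I_m -> R) :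
  (2 <= d)%N ->
  \rank A = d ->
  injective (act A) ->
  is_distr setT poff ->
  (1 <= T)%N ->
  Al != set0 ->
  char_poly (Vmat A poff) = \prod_(k < d) ('X - (lam k)%:P) ->
  (forall i j : 'I_d, (i <= j)%N -> lam i <= lam j) ->
  let al : R := Toff%:R / (Toff%:R + T%:R) in
  fw_iter A al poff Al t p ->
  (1 - al) *: Vmat A p + al *: Vmat A poff \in unitmx ->
  slack A al poff Al p <= deff A T Toff poff lam / d%:R ->
  (1 - al) * gB A Al (mix al p poff) <= 2 * deff A T Toff poff lam.
Proof.
move=> d2 _ _ [po0 _ po1] T1 _ hchar _ al hfw hu hslack.
have [p0 p2 p1] := fw_inv d2 hfw.
have Tp : (0 : R) < T%:R by rewrite ltr0n.
have To0 : (0 : R) <= Toff%:R by rewrite ler0n.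
have TT : (0 : R) < Toff%:R + T%:R by lra.
have al0 : 0 <= al by rewrite /al divr_ge0 // ltW.
have e1al : 1 - al = T%:R / (Toff%:R + T%:R).
  by rewrite /al; field; rewrite gt_eqF.
have al1 : 0 < 1 - al by rewrite e1al divr_gt0.
have dp : (0 : R) < d%:R by rewrite ltr0n; apply: leq_trans d2.
have lam0 := lam_ge0 po0 hchar.
set Vp := Vmat A p; set Vo := Vmat A poff.
set Mx := (1 - al) *: Vp + al *: Vo.
set H := Hmat A al poff p.
have HE : H = invmx Mx by [].
set Q := (1 - al) * \tr (H *m Vp).
have trd : Q + al * \tr (H *m Vo) = d%:R by apply: trH.
set L := Lmax A.
have L0 : 0 <= L := Lmax_ge0 A.
set De := deff A T Toff poff lam.
set S := \sum_(k < d) (1 + (Toff%:R / T%:R) * (lam k / L))^-1.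
have S0 : 0 <= S.
  apply: sumr_ge0 => k _; rewrite invr_ge0.
  have : 0 <= (Toff%:R / T%:R) * (lam k / L).
    by apply: mulr_ge0; apply: divr_ge0 => //; apply: ltW.
  lra.
have key1 : forall k, k \in Al -> (1 - al) * quad H (act A k) <= De + Q.
  move=> k kA.
  have wk := le_bigmax_cond 0 (wgt A al poff p) kA.
  move: hslack; rewrite /slack lerBlDr ler_pdivrMr // mulrDl divfK ?gt_eqF // mul1r.
  move=> hs; have := le_trans wk hs; rewrite wgt_eq -/H.
  rewrite -/Vo -/De; move: trd; lra.
have Mxs : Mx^T = Mx by apply: Mx_sym.
have quadMx : forall x, quad Mx x = (1 - al) * quad Vp x + al * quad Vo x.
  by move=> x; rewrite quadD !quadZ.
have Mxpsd : forall x, 0 <= quad Mx x.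
  move=> x; rewrite quadMx; apply: addr_ge0; apply: mulr_ge0.
  - exact: ltW.
  - exact: quad_Vmat_ge0.
  - exact: al0.
  - exact: quad_Vmat_ge0.
have QS : Q <= S.
  have [Lz|Lp] : L = 0 \/ 0 < L.
    by move: L0; rewrite le_eqVlt => /orP [/eqP <-|]; [left|right].
    have az : forall j, act A j = 0.
      move=> j; apply: inner_eq0; apply/eqP; rewrite eq_le inner_ge0 andbT -Lz.
      exact: (@le_bigmax _ R _ 0 (fun j => inner (act A j) (act A j)) j).
    have -> : Q = 0.
      rewrite /Q tr_Vmat big1 ?mulr0 // => j _.
      by rewrite az /quad trmx0 !mul0mx mxE mulr0.
    exact: S0.
  pose l := (1 - al) * L.
  have lp : 0 < l by apply: mulr_gt0.
  have hnz : forall k, l + al * lam k != 0.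
    move=> k; apply: lt0r_neq0; have := mulr_ge0 al0 (lam0 k); lra.
  have [M'u trM'] := EL (Vmat_sym A poff) hchar hnz.
  set M' := l%:M + al *: Vo in M'u trM'.
  set H' := invmx M' in trM'.
  have trd' : l * \tr H' + al * \tr (H' *m Vo) = d%:R.
    rewrite -mxtrace1 -(mulVmx M'u) -/H' mulmxDr mul_mx_scalar -scalemxAr.
    by rewrite mxtraceD !mxtraceZ.
  have mono : \tr (H' *m Vo) <= \tr (H *m Vo).
    rewrite !tr_Vmat; apply: ler_sum => j _; apply: ler_wpM2l => //.
    apply: inv_mono => // x.
    rewrite quadMx /M' quadD quadZ quad_scalar.
    have h : quad Vp x <= L * inner x x by apply: quadVp_le.
    have : (1 - al) * quad Vp x <= (1 - al) * (L * inner x x).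
      by apply: ler_wpM2l => //; apply: ltW.
    rewrite /l mulrA; lra.
  have : Q <= l * \tr H'.
    have := ler_wpM2l al0 mono; lra.
  move/le_trans; apply; rewrite trM' mulr_sumr le_eqVlt; apply/orP; left; apply/eqP.
  apply: eq_bigr => k _; rewrite /l e1al /al.
  field.
  rewrite (gt_eqF Lp) (gt_eqF Tp) (gt_eqF TT) /= andbT; apply: lt0r_neq0.
  have h1 := mulr_gt0 Tp Lp; have h2 := mulr_ge0 To0 (lam0 k); lra.
have QG : (0 < Toff)%N -> Vo \in unitmx -> Q <= T%:R / Toff%:R * gB A setT poff.
  move=> Tof Vou.
  have Tofp : (0 : R) < Toff%:R by rewrite ltr0n.
  have alp : 0 < al by rewrite /al divr_gt0.
  set g := gB A setT poff.
  have alVu : al *: Vo \in unitmx by rewrite unitmxZ // unitfE gt_eqF.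
  have hj : forall j, quad H (act A j) <= al^-1 * g.
    move=> j; apply: (@le_trans _ _ (quad (invmx (al *: Vo)) (act A j))).
      rewrite HE; apply: inv_mono => //.
      - by apply/matrixP => i k; rewrite !mxE (Vmat_symE A poff k i).
      - by move=> x; rewrite quadZ; apply: mulr_ge0 => //; apply: quad_Vmat_ge0.
      - move=> x; rewrite quadMx quadZ.
        have : 0 <= (1 - al) * quad Vp x.
          by apply: mulr_ge0; [exact: ltW | exact: quad_Vmat_ge0].
        lra.
    rewrite invmxZ // quadZ; apply: ler_wpM2l; first by rewrite invr_ge0.
    exact: (le_bigmax_cond 0 (fun j => quad (invmx (Vmat A poff)) (act A j)) (in_setT j)).
  rewrite /Q tr_Vmat.
  apply: (@le_trans _ _ ((1 - al) * \sum_j p j * (al^-1 * g))).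
    apply: ler_wpM2l; first exact: ltW.
    by apply: ler_sum => j _; apply: ler_wpM2l.
  rewrite -mulr_suml p1 mul1r mulrA le_eqVlt; apply/orP; left; apply/eqP.
  congr (_ * _); rewrite e1al /al; field.
  by rewrite (gt_eqF Tofp) (gt_eqF TT).
have key2 : Q <= De.
  rewrite /De /deff -/L -/S; case: ifP => [/andP [h1 h2]|_]; last exact: QS.
  by rewrite le_min QS QG.
have De0 : 0 <= De.
  rewrite /De /deff -/L -/S; case: ifP => [/andP [h1 h2]|_]; last exact: S0.
  rewrite le_min S0 /=; apply: mulr_ge0; first by apply: divr_ge0; rewrite ler0n.
  exact: bigmax_ge_id.
have hgB : gB A Al (mix al p poff) = \big[Num.max/0]_(j in Al) quad H (act A j).
  by rewrite /gB Vmat_mix.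
rewrite hgB -ler_pdivlMl //; apply: bigmax_le.
  by apply: mulr_ge0; [rewrite invr_ge0 ltW | lra].
move=> k kA; rewrite ler_pdivlMl //.
have := key1 k kA; lra.
Qed.
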